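(* Let $D\ge1$, $\beta>0$, $c:\{0,\ldots,D\}\to\mathbb{R}$. If $T_N$ is a random plane tree distributed according to $P_N$ on $\mathbb{T}_N(D)$, then $\left(\frac{\chi_0(T_N)}{N},\frac{\chi_1(T_N)}{N},\ldots,\frac{\chi_D(T_N)}{N}\right)\to p^*$ in probability as $N\to\infty$.
   Context: A plane (ordered) tree is a rooted tree in which the children of each vertex are linearly ordered. $\mathbb{T}_N(D)$ is the set of plane trees on $N$ vertices in which every vertex has at most $D$ children; $\chi_k(T)$ is the number of vertices of $T$ with exactly $k$ children. $H(T)=\sum_{k=0}^D c(k)\chi_k(T)$, $P_N\{T\}=e^{-\beta H(T)}/\sum_{T'\in\mathbb{T}_N(D)}e^{-\beta H(T')}$. $\mathcal{M}=\{p\in[0,1]^{D+1}:\ \sum_{k=0}^D p_k=1,\ \sum_{k=0}^D kp_k=1\}$, $J(p)=\sum_{k=0}^D p_k\ln p_k+\beta\sum_{k=0}^D p_kc(k)$ (with $0\ln0=0$), and $p^*$ is the unique minimizer of $J$ on $\mathcal{M}$. *)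

(* Defs.v *)
From Stdlib Require Import Reals List Arith.
Open Scope R_scope.

Inductive tree : Type := Node : list tree -> tree.

Fixpoint tsize (t : tree) : nat :=
  match t with
  | Node ts => S ((fix go (l : list tree) : nat :=
                     match l with nil => 0%nat | u :: l' => (tsize u + go l')%nat end) ts)
  end.

Fixpoint chi (k : nat) (t : tree) : nat :=
  match t with
  | Node ts => ((if Nat.eqb (length ts) k then 1 else 0) +
               (fix go (l : list tree) : nat :=
                  match l with nil => 0%nat | u :: l' => (chi k u + go l')%nat end) ts)%nat
  end.

Fixpoint max_children_le (D : nat) (t : tree) : Prop :=
  match t with
  | Node ts => (length ts <= D)%nat /\
               (fix go (l : list tree) : Prop :=
                  match l with nil => True | u :: l' => max_children_le D u /\ go l' end) ts
  end.

Definition in_TND (D N : nat) (t : tree) : Prop :=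
  tsize t = N /\ max_children_le D t.

Definition enumerates (D N : nat) (l : list tree) : Prop :=
  NoDup l /\ forall t, In t l <-> in_TND D N t.

Definition Ham (D : nat) (c : nat -> R) (t : tree) : R :=
  sum_f_R0 (fun k => c k * INR (chi k t)) D.

Definition weight (D : nat) (c : nat -> R) (beta : R) (t : tree) : R :=
  exp (- beta * Ham D c t).

Definition sumR (f : tree -> R) (l : list tree) : R :=
  fold_right (fun t acc => f t + acc) 0 l.

Definition gibbs_prob (D : nat) (c : nat -> R) (beta : R) (l : list tree)
  (E : tree -> bool) : R :=
  sumR (fun t => if E t then weight D c beta t else 0) l / sumR (weight D c beta) l.

Definition deviation (D N : nat) (p : nat -> R) (t : tree) : R :=
  fold_right Rmax 0 (map (fun k => Rabs (INR (chi k t) / INR N - p k)) (seq 0 (S D))).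

Definition Rgtb (x y : R) : bool := if Rgt_dec x y then true else false.

Definition in_M (D : nat) (p : nat -> R) : Prop :=
  (forall k, (k <= D)%nat -> 0 <= p k <= 1) /\
  sum_f_R0 p D = 1 /\
  sum_f_R0 (fun k => INR k * p k) D = 1.

Definition xlnx (x : R) : R := if Req_EM_T x 0 then 0 else x * ln x.

Definition J (D : nat) (c : nat -> R) (beta : R) (p : nat -> R) : R :=
  sum_f_R0 (fun k => xlnx (p k)) D + beta * sum_f_R0 (fun k => p k * c k) D.

Definition is_minimizer_J (D : nat) (c : nat -> R) (beta : R) (p : nat -> R) : Prop :=
  in_M D p /\ forall q, in_M D q -> J D c beta p <= J D c beta q.

(* Main.v *)
Require Import Defs.
From Stdlib Require Import Reals List Arith Lia Lra ZArith Ranalysis_reg.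
Open Scope R_scope.


Definition sumN (l : list nat) (g : nat -> R) : R := fold_right (fun x acc => g x + acc) 0 l.
Definition prodw (q : nat -> R) (u : list nat) : R := fold_right (fun x acc => q x * acc) 1 u.
Definition sumL {A : Type} (l : list A) (G : A -> R) : R := fold_right (fun u acc => G u + acc) 0 l.

Fixpoint seqs (D n : nat) : list (list nat) :=
  match n with
  | O => nil :: nil
  | S n' => flat_map (fun x => map (cons x) (seqs D n')) (seq 0 (S D))
  end.

Lemma sumL_app {A} (l1 l2 : list A) G : sumL (l1 ++ l2) G = sumL l1 G + sumL l2 G.
Proof. induction l1; simpl; [ring | rewrite IHl1; ring]. Qed.

Lemma sumL_map {A B} (f : A -> B) l G : sumL (map f l) G = sumL l (fun x => G (f x)).
Proof. induction l; simpl; [ring | rewrite IHl; ring]. Qed.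

Lemma sumL_flat_map {A B} (f : A -> list B) l G :
  sumL (flat_map f l) G = sumL l (fun x => sumL (f x) G).
Proof. induction l; simpl; [ring | rewrite sumL_app, IHl; ring]. Qed.

Lemma sumL_ext {A} (l : list A) G1 G2 : (forall x, In x l -> G1 x = G2 x) -> sumL l G1 = sumL l G2.
Proof. induction l; simpl; intros H; [ring|]. rewrite H, IHl; auto. Qed.

Lemma sumL_le {A} (l : list A) G1 G2 : (forall x, In x l -> G1 x <= G2 x) -> sumL l G1 <= sumL l G2.
Proof. induction l; simpl; intros H; [lra|]. apply Rplus_le_compat; auto. Qed.

Lemma sumL_nonneg {A} (l : list A) G : (forall x, In x l -> 0 <= G x) -> 0 <= sumL l G.
Proof. induction l; simpl; intros H; [lra|]. apply Rplus_le_le_0_compat; auto. Qed.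

Lemma sumL_plus {A} (l : list A) G1 G2 : sumL l (fun x => G1 x + G2 x) = sumL l G1 + sumL l G2.
Proof. induction l; simpl; [ring | rewrite IHl; ring]. Qed.

Lemma sumL_scal {A} (l : list A) a G : sumL l (fun x => a * G x) = a * sumL l G.
Proof. induction l; simpl; [ring | rewrite IHl; ring]. Qed.

Lemma sumL_filter {A} (f : A -> bool) l G :
  sumL (filter f l) G = sumL l (fun u => if f u then G u else 0).
Proof. induction l; simpl; [ring|]. destruct (f a); simpl; rewrite IHl; ring. Qed.

Lemma sumL_sumN l g : sumL l g = sumN l g.
Proof. reflexivity. Qed.

Lemma sumN_app l1 l2 g : sumN (l1 ++ l2) g = sumN l1 g + sumN l2 g.
Proof. induction l1; simpl; [ring | rewrite IHl1; ring]. Qed.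

Lemma sum_f_R0_sumN g D : sum_f_R0 g D = sumN (seq 0 (S D)) g.
Proof.
  induction D. simpl. unfold sumN; simpl; ring.
  simpl sum_f_R0. rewrite IHD. rewrite (seq_S (S D) 0), sumN_app. simpl. ring.
Qed.

Lemma sumL_seqsS D n G :
  sumL (seqs D (S n)) G = sumN (seq 0 (S D)) (fun x => sumL (seqs D n) (fun u => G (x :: u))).
Proof.
  change (seqs D (S n)) with (flat_map (fun x => map (cons x) (seqs D n)) (seq 0 (S D))).
  rewrite sumL_flat_map.
  apply sumL_ext. intros x _. rewrite sumL_map. reflexivity.
Qed.

Lemma sumN_ext l g1 g2 : (forall x, In x l -> g1 x = g2 x) -> sumN l g1 = sumN l g2.
Proof. apply sumL_ext. Qed.
Lemma sumN_le l g1 g2 : (forall x, In x l -> g1 x <= g2 x) -> sumN l g1 <= sumN l g2.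
Proof. apply sumL_le. Qed.
Lemma sumN_scal l a g : sumN l (fun x => a * g x) = a * sumN l g.
Proof. apply sumL_scal. Qed.
Lemma sumN_plus l g1 g2 : sumN l (fun x => g1 x + g2 x) = sumN l g1 + sumN l g2.
Proof. apply sumL_plus. Qed.
Lemma sumN_nonneg l g : (forall x, In x l -> 0 <= g x) -> 0 <= sumN l g.
Proof. apply sumL_nonneg. Qed.

Lemma sumL_prodw D n q :
  sumL (seqs D n) (prodw q) = (sumN (seq 0 (S D)) q) ^ n.
Proof.
  induction n.
  - simpl. unfold prodw. simpl. ring.
  - rewrite sumL_seqsS, <- tech_pow_Rmult.
    rewrite (sumN_ext _ _ (fun x => q x * (sumN (seq 0 (S D)) q) ^ n)).
    + rewrite (sumN_ext _ _ (fun x => sumN (seq 0 (S D)) q ^ n * q x)) by (intros; ring).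
      rewrite sumN_scal. ring.
    + intros x _. rewrite <- IHn, <- sumL_scal. reflexivity.
Qed.

Lemma In_seqs D n u : In u (seqs D n) <-> length u = n /\ Forall (fun x => x <= D)%nat u.
Proof.
  revert u; induction n; intros u.
  - simpl. split. intros [<-|[]]. split; auto.
    intros [H _]. destruct u; simpl in H; [auto|discriminate].
  - change (seqs D (S n)) with (flat_map (fun x => map (cons x) (seqs D n)) (seq 0 (S D))).
    rewrite in_flat_map. split.
    + intros [x [Hx Hu]]. apply in_map_iff in Hu. destruct Hu as [u' [<- Hu']].
      apply IHn in Hu'. destruct Hu'. apply in_seq in Hx. simpl. split; [lia|].
      constructor; [lia|auto].
    + intros [Hl HF]. destruct u as [|x u']; simpl in Hl; [discriminate|].
      inversion HF; subst. exists x. split. apply in_seq; lia.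
      apply in_map. apply IHn. split; auto.
Qed.

Lemma NoDup_map_inj {A B} (f : A -> B) l :
  NoDup l -> (forall x y, In x l -> In y l -> f x = f y -> x = y) -> NoDup (map f l).
Proof.
  induction l; simpl; intros Hn Hi; constructor.
  - inversion Hn; subst. intros Hin. apply in_map_iff in Hin. destruct Hin as [y [Hy Hy2]].
    assert (y = a) by (apply Hi; auto). subst. tauto.
  - inversion Hn; subst. apply IHl; auto.
Qed.

Lemma NoDup_seqs D n : NoDup (seqs D n).
Proof.
  induction n. simpl. constructor; [simpl; tauto|constructor].
  change (seqs D (S n)) with (flat_map (fun x => map (cons x) (seqs D n)) (seq 0 (S D))).
  generalize (seq_NoDup (S D) 0). generalize (seq 0 (S D)). intros l Hl.
  induction l; simpl. constructor.
  inversion Hl; subst. apply NoDup_app. apply NoDup_map_inj; auto.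
  intros x y _ _ H; injection H; auto. auto.
  intros x Hx Hx2. apply in_map_iff in Hx. destruct Hx as [u [<- _]].
  apply in_flat_map in Hx2. destruct Hx2 as [y [Hy Hy2]]. apply in_map_iff in Hy2.
  destruct Hy2 as [v [Hv _]]. injection Hv; intros; subst. auto.
Qed.

Lemma sumL_incl_le {A} (l1 l2 : list A) G :
  NoDup l1 -> incl l1 l2 -> (forall x, In x l2 -> 0 <= G x) -> sumL l1 G <= sumL l2 G.
Proof.
  revert l2; induction l1 as [|a l1 IH]; intros l2 Hnd Hincl Hpos.
  - simpl. apply sumL_nonneg; auto.
  - inversion Hnd; subst. assert (Ha : In a l2) by (apply Hincl; simpl; auto).
    apply in_split in Ha. destruct Ha as [l3 [l4 ->]].
    rewrite sumL_app. change (sumL (a::l1) G) with (G a + sumL l1 G).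
    change (sumL (a::l4) G) with (G a + sumL l4 G).
    assert (IH' := IH (l3 ++ l4) H2).
    rewrite sumL_app in IH'.
    assert (sumL l1 G <= sumL l3 G + sumL l4 G).
    { apply IH'. intros x Hx. assert (In x (l3 ++ a :: l4)) by (apply Hincl; simpl; auto).
      apply in_app_or in H. apply in_or_app. destruct H as [H|[H|H]]; auto. subst; tauto.
      intros x Hx. apply Hpos. apply in_app_or in Hx; apply in_or_app; simpl; tauto. }
    lra.
Qed.



Definition tree_ind2 (P : tree -> Prop) (HP : forall ts, Forall P ts -> P (Node ts)) : forall t, P t :=
  fix F (t : tree) : P t :=
  match t with
  | Node ts => HP ts ((fix go (l : list tree) : Forall P l :=
                        match l with nil => Forall_nil _ | u :: l' => Forall_cons _ (F u) (go l') end) ts)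
  end.

Fixpoint enc (t : tree) : list nat :=
  match t with
  | Node ts => length ts :: (fix go (l : list tree) : list nat :=
                  match l with nil => nil | u :: l' => enc u ++ go l' end) ts
  end.

Definition encF (ts : list tree) : list nat := concat (map enc ts).

Lemma enc_Node ts : enc (Node ts) = length ts :: encF ts.
Proof. simpl. f_equal. induction ts; simpl; auto. rewrite IHts. reflexivity. Qed.

Lemma encF_cons t ts : encF (t :: ts) = enc t ++ encF ts.
Proof. reflexivity. Qed.

Lemma encF_app ts1 ts2 : encF (ts1 ++ ts2) = encF ts1 ++ encF ts2.
Proof. unfold encF. rewrite map_app, concat_app. reflexivity. Qed.

Lemma tsize_Node ts : tsize (Node ts) = S (fold_right (fun u acc => (tsize u + acc)%nat) 0%nat ts).
Proof. simpl. f_equal; try (induction ts; simpl; auto). Qed.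

Lemma chi_Node k ts : chi k (Node ts) =
  ((if Nat.eqb (length ts) k then 1 else 0) + fold_right (fun u acc => (chi k u + acc)%nat) 0%nat ts)%nat.
Proof. simpl. f_equal; try (induction ts; simpl; auto). Qed.

Lemma mcl_Node D ts : max_children_le D (Node ts) <-> (length ts <= D)%nat /\ Forall (max_children_le D) ts.
Proof.
  simpl. apply and_iff_compat_l. induction ts; simpl. split; auto.
  rewrite IHts. split. intros [H1 H2]; constructor; auto. intros H; inversion H; auto.
Qed.

Fixpoint cnt (k : nat) (w : list nat) : nat :=
  match w with nil => 0%nat | x :: w' => ((if Nat.eqb x k then 1 else 0) + cnt k w')%nat end.

Lemma cnt_app k w1 w2 : cnt k (w1 ++ w2) = (cnt k w1 + cnt k w2)%nat.
Proof. induction w1; simpl; auto. rewrite IHw1. lia. Qed.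

Lemma tsize_enc t : tsize t = length (enc t).
Proof.
  induction t using tree_ind2. rewrite tsize_Node, enc_Node. simpl. f_equal.
  induction H; simpl; auto. rewrite encF_cons, length_app. lia.
Qed.

Lemma chi_enc k t : chi k t = cnt k (enc t).
Proof.
  induction t using tree_ind2. rewrite chi_Node, enc_Node. simpl. f_equal.
  induction H; simpl; auto. rewrite encF_cons, cnt_app. lia.
Qed.

Lemma mcl_enc D t : max_children_le D t <-> Forall (fun x => x <= D)%nat (enc t).
Proof.
  induction t using tree_ind2. rewrite mcl_Node, enc_Node.
  assert (Forall (max_children_le D) ts <-> Forall (fun x => x <= D)%nat (encF ts)).
  { induction H; simpl. split; constructor.
    rewrite encF_cons, Forall_app. split.
    - intros Hf; inversion Hf; subst. split. apply H; auto. apply IHForall; auto.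
    - intros [H1 H2]. constructor. apply H; auto. apply IHForall; auto. }
  rewrite H0. split. intros [? ?]; constructor; auto. intros Hf; inversion Hf; auto.
Qed.

Fixpoint snat (w : list nat) : nat := match w with nil => 0%nat | x :: w' => (x + snat w')%nat end.

Lemma snat_app w1 w2 : snat (w1 ++ w2) = (snat w1 + snat w2)%nat.
Proof. induction w1; simpl; auto. rewrite IHw1. lia. Qed.

Lemma snat_enc t : (snat (enc t) + 1 = length (enc t))%nat.
Proof.
  induction t using tree_ind2. rewrite enc_Node. simpl.
  assert (snat (encF ts) + length ts = length (encF ts))%nat.
  { induction H; simpl; auto. rewrite encF_cons, snat_app, length_app. simpl. lia. }
  lia.
Qed.

Lemma enc_inj_gen t1 : forall t2 r1 r2, enc t1 ++ r1 = enc t2 ++ r2 -> t1 = t2 /\ r1 = r2.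
Proof.
  induction t1 as [ts1 IH] using tree_ind2. intros [ts2] r1 r2 He.
  rewrite !enc_Node in He. simpl in He. injection He. intros He2 Hl.
  assert (forall ts2 r1 r2, length ts1 = length ts2 -> encF ts1 ++ r1 = encF ts2 ++ r2 -> ts1 = ts2 /\ r1 = r2).
  { clear -IH. induction IH; intros ts2 r1 r2 Hl He.
    - destruct ts2; simpl in Hl; [|discriminate]. auto.
    - destruct ts2 as [|y ts2]; simpl in Hl; [discriminate|].
      rewrite !encF_cons, <- !app_assoc in He. apply H in He. destruct He as [-> He].
      apply IHIH in He; [|lia]. destruct He as [-> ->]. auto. }
  apply H in He2; auto. destruct He2 as [-> ->]. auto.
Qed.

Lemma enc_inj t1 t2 : enc t1 = enc t2 -> t1 = t2.
Proof. intros H. apply (enc_inj_gen t1 t2 nil nil). rewrite !app_nil_r. auto. Qed.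

(* Lukasiewicz condition *)
Fixpoint lk (k : nat) (w : list nat) : Prop :=
  match w with nil => k = 0%nat | x :: w' => (0 < k)%nat /\ lk (k - 1 + x) w' end.

Lemma lk_parse w : forall k, lk k w -> exists ts, length ts = k /\ encF ts = w.
Proof.
  induction w as [|x w IH]; intros k Hk; simpl in Hk.
  - subst. exists nil. auto.
  - destruct Hk as [Hk Hw]. apply IH in Hw. destruct Hw as [ts [Hl He]].
    exists (Node (firstn x ts) :: skipn x ts). split.
    + simpl. rewrite length_skipn. lia.
    + rewrite encF_cons, enc_Node. simpl. rewrite length_firstn. rewrite <- He.
      replace (Nat.min x (length ts)) with x by lia. f_equal.
      rewrite <- encF_app, firstn_skipn. auto.
Qed.

Lemma lk_parse1 w : lk 1 w -> exists t, enc t = w.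
Proof.
  intros H. apply lk_parse in H. destruct H as [[|t [|]] [Hl He]]; simpl in Hl; try lia.
  exists t. rewrite <- He. unfold encF. simpl. rewrite app_nil_r. auto.
Qed.


Lemma exp_quad y : Rabs y <= / 2 -> exp y <= 1 + y + 2 * y ^ 2.
Proof.
  intros Hy. assert (Hy1 : - / 2 <= y) by (revert Hy; unfold Rabs; destruct Rcase_abs; lra).
  assert (Hy2 : y <= / 2) by (revert Hy; unfold Rabs; destruct Rcase_abs; lra).
  assert (H1 := exp_ineq1_le (- y)).
  assert (Hpos : 0 < 1 - y) by lra.
  assert (exp y * exp (- y) = 1) by (rewrite <- exp_plus; replace (y + - y) with 0 by ring; apply exp_0).
  assert (exp y * (1 - y) <= 1).
  { rewrite <- H. apply Rmult_le_compat_l. left; apply exp_pos. lra. }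
  assert (exp y <= / (1 - y)).
  { apply (Rmult_le_reg_r (1 - y)); auto. rewrite Rinv_l; lra. }
  assert (/ (1 - y) <= 1 + y + 2 * y ^ 2).
  { apply (Rmult_le_reg_r (1 - y)); auto. rewrite Rinv_l by lra.
    assert (0 <= y^2 * (1 - 2 * y)) by (apply Rmult_le_pos; [apply pow2_ge_0|lra]). nra. }
  lra.
Qed.

Lemma exp_INR_mult n x : exp (INR n * x) = exp x ^ n.
Proof.
  induction n. simpl. rewrite Rmult_0_l; apply exp_0.
  rewrite S_INR, Rmult_plus_distr_r, Rmult_1_l, exp_plus, IHn. simpl. ring.
Qed.

Definition isprob (D : nat) (p : nat -> R) : Prop :=
  (forall x, (x <= D)%nat -> 0 <= p x) /\ sumN (seq 0 (S D)) p = 1.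

Lemma mgf_one D p f B lam :
  isprob D p -> (forall x, (x <= D)%nat -> Rabs (f x) <= B) ->
  sumN (seq 0 (S D)) (fun x => p x * f x) = 0 -> Rabs lam * B <= / 2 ->
  sumN (seq 0 (S D)) (fun x => p x * exp (lam * f x)) <= exp (2 * lam ^ 2 * B ^ 2).
Proof.
  intros [Hp0 Hp1] Hf Hm Hl.
  eapply Rle_trans.
  - apply (sumN_le _ _ (fun x => p x * 1 + lam * (p x * f x) + 2 * lam^2 * (p x * f x ^ 2))).
    intros x Hx. apply in_seq in Hx.
    assert (Hb := Hf x ltac:(lia)). assert (Hpx := Hp0 x ltac:(lia)).
    assert (Rabs (lam * f x) <= / 2).
    { rewrite Rabs_mult. eapply Rle_trans; [|apply Hl]. apply Rmult_le_compat_l; auto. apply Rabs_pos. }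
    apply exp_quad in H.
    assert (p x * exp (lam * f x) <= p x * (1 + lam * f x + 2 * (lam * f x) ^ 2)) by (apply Rmult_le_compat_l; auto).
    nra.
  - rewrite !sumN_plus, !sumN_scal, Hm.
    rewrite (sumN_ext _ (fun x => p x * 1) p) by (intros; ring). rewrite Hp1.
    assert (sumN (seq 0 (S D)) (fun x => p x * f x ^ 2) <= B ^ 2).
    { apply Rle_trans with (sumN (seq 0 (S D)) (fun x => B ^ 2 * p x)).
      2:{ rewrite sumN_scal, Hp1. lra. }
      apply sumN_le. intros x Hx. apply in_seq in Hx.
      assert (Hb := Hf x ltac:(lia)). assert (Hpx := Hp0 x ltac:(lia)).
      assert (f x ^ 2 <= B ^ 2) by (rewrite <- pow2_abs; apply pow_incr; split; [apply Rabs_pos|auto]).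
      nra. }
    assert (0 <= 2 * lam ^ 2) by (assert (0 <= lam^2) by apply pow2_ge_0; lra).
    eapply Rle_trans; [|apply exp_ineq1_le].
    assert (2 * lam ^ 2 * sumN (seq 0 (S D)) (fun x => p x * f x ^ 2) <= 2 * lam ^2 * B^2)
      by (apply Rmult_le_compat_l; auto).
    lra.
Qed.

Lemma prodw_exp p f lam u :
  prodw p u * exp (lam * sumN u f) = prodw (fun x => p x * exp (lam * f x)) u.
Proof.
  induction u; simpl. rewrite Rmult_0_r, exp_0. ring.
  rewrite <- IHu. rewrite Rmult_plus_distr_l, exp_plus. unfold prodw in *. simpl. ring.
Qed.

Lemma chernoff_seqs D p f B lam n :
  isprob D p -> (forall x, (x <= D)%nat -> Rabs (f x) <= B) ->
  sumN (seq 0 (S D)) (fun x => p x * f x) = 0 -> Rabs lam * B <= / 2 ->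
  sumL (seqs D n) (fun u => prodw p u * exp (lam * sumN u f)) <= exp (INR n * (2 * lam ^ 2 * B ^ 2)).
Proof.
  intros Hp Hf Hm Hl.
  rewrite (sumL_ext _ _ (prodw (fun x => p x * exp (lam * f x)))) by (intros; apply prodw_exp).
  rewrite sumL_prodw, exp_INR_mult.
  apply pow_incr. split.
  - apply sumN_nonneg. intros x Hx. apply in_seq in Hx. apply Rmult_le_pos.
    apply (proj1 Hp); lia. left; apply exp_pos.
  - eapply mgf_one; eauto.
Qed.


Fixpoint posFb (k : nat) (u : list nat) : bool :=
  match u with nil => Nat.ltb 0 k | x :: u' => Nat.ltb 0 k && posFb (k - 1 + x) u' end.

Fixpoint fin (k : nat) (u : list nat) : nat :=
  match u with nil => k | x :: u' => fin (k - 1 + x) u' end.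

Fixpoint Qrec (lam h : R) (u : list nat) : R :=
  match u with nil => exp (- lam * h) | x :: u' => exp (- lam * h) + Qrec lam (h + INR x - 1) u' end.

Lemma Qrec_nonneg lam h u : 0 <= Qrec lam h u.
Proof.
  revert h; induction u; intros h; simpl. left; apply exp_pos.
  apply Rplus_le_le_0_compat. left; apply exp_pos. auto.
Qed.

Lemma posFb_false lam u : forall k, posFb k u = false -> 1 <= Qrec lam (INR k) u.
Proof.
  induction u as [|x u IH]; intros k H; simpl in *.
  - destruct k; [|discriminate]. simpl. rewrite Rmult_0_r, exp_0. lra.
  - destruct k as [|k].
    + simpl. rewrite Rmult_0_r, exp_0. assert (0 <= Qrec lam (0 + INR x - 1) u) by apply Qrec_nonneg. lra.
    + simpl in H. apply IH in H. replace (S k - 1 + x)%nat with (k + x)%nat in H by lia.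
      rewrite plus_INR in H. rewrite S_INR.
      replace (INR k + 1 + INR x - 1) with (INR k + INR x) by ring.
      rewrite Nat.sub_0_r in H. assert (0 < exp (- lam * (INR k + 1))) by apply exp_pos. lra.
Qed.

Lemma Qrec_bound D p lam M n :
  isprob D p -> 1 <= M ->
  sumN (seq 0 (S D)) (fun x => p x * exp (- lam * (INR x - 1))) <= M ->
  forall h, sumL (seqs D n) (fun u => prodw p u * Qrec lam h u) <= (INR n + 1) * M ^ n * exp (- lam * h).
Proof.
  intros [Hp0 Hp1] HM HS. induction n; intros h.
  - simpl. unfold prodw; simpl. lra.
  - rewrite sumL_seqsS.
    apply Rle_trans with (sumN (seq 0 (S D)) (fun x => p x * exp (- lam * h) +
                            (INR n + 1) * M ^ n * exp (- lam * h) * (p x * exp (- lam * (INR x - 1))))).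
    + apply sumN_le. intros x Hx. apply in_seq in Hx. assert (Hpx := Hp0 x ltac:(lia)).
      simpl Qrec.
      rewrite (sumL_ext _ _ (fun u => p x * exp (- lam * h) * prodw p u + p x * (prodw p u * Qrec lam (h + INR x - 1) u)))
        by (intros y _; change (prodw p (x::y)) with (p x * prodw p y); ring).
      rewrite sumL_plus, !sumL_scal, sumL_prodw, Hp1, pow1.
      assert (H := IHn (h + INR x - 1)).
      replace (exp (- lam * (h + INR x - 1))) with (exp (- lam * h) * exp (- lam * (INR x - 1))) in H
        by (rewrite <- exp_plus; f_equal; ring).
      nra.
    + rewrite sumN_plus, !sumN_scal.
      rewrite (sumN_ext _ (fun x => p x * exp (- lam * h)) (fun x => exp (- lam * h) * p x)) by (intros; ring).
      rewrite sumN_scal, Hp1.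
      rewrite S_INR. simpl pow.
      assert (0 <= INR n) by apply pos_INR.
      assert (1 <= M ^ n) by (apply pow_R1_Rle; auto).
      assert (0 < exp (- lam * h)) by apply exp_pos.
      assert ((INR n + 1) * M ^ n * exp (- lam * h) *
                sumN (seq 0 (S D)) (fun x : nat => p x * exp (- lam * (INR x - 1))) <=
              (INR n + 1) * M ^ n * exp (- lam * h) * M).
      { apply Rmult_le_compat_l; auto. apply Rmult_le_pos; [|lra]. apply Rmult_le_pos; lra. }
      assert (1 <= M * M ^ n) by (rewrite <- (Rmult_1_l 1); apply Rmult_le_compat; lra).
      assert (exp (- lam * h) <= M * M ^ n * exp (- lam * h)) by nra.
      replace ((INR n + 1 + 1) * (M * M ^ n) * exp (- lam * h)) with
        (M * M ^ n * exp (- lam * h) + (INR n + 1) * M ^ n * exp (- lam * h) * M) by ring.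
      lra.
Qed.

Lemma posFb_lk k u w : posFb k u = true -> lk (fin k u) w -> lk k (u ++ w).
Proof.
  revert k; induction u as [|x u IH]; intros k H1 H2; simpl in *; auto.
  apply andb_prop in H1. destruct H1 as [H1 H3]. apply Nat.ltb_lt in H1. split; auto.
Qed.

Fixpoint sR (u : list nat) : R := match u with nil => 0 | x :: u' => (INR x - 1) + sR u' end.

Lemma posFb_fin k u : posFb k u = true -> INR (fin k u) = INR k + sR u.
Proof.
  revert k; induction u as [|x u IH]; intros k H; simpl in *. ring.
  apply andb_prop in H. destruct H as [H1 H3]. apply Nat.ltb_lt in H1.
  rewrite IH by auto.
  rewrite plus_INR, minus_INR by lia. simpl. ring.
Qed.

Lemma sR_sumN u : sR u = sumN u (fun x => INR x - 1).
Proof. induction u; simpl; try rewrite IHu; auto. Qed.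


Definition fmean (beta : R) (c : nat -> R) (l : list nat) (b : R) : R :=
  sumN l (fun k => (INR k - 1) * exp (b * INR k - beta * c k)).

Lemma fmean_cont beta c l : continuity (fmean beta c l).
Proof.
  induction l as [|k l IH].
  - unfold fmean. simpl. apply continuity_const. intros x y; reflexivity.
  - change (continuity (fun b => (INR k - 1) * exp (b * INR k - beta * c k) + fmean beta c l b)).
    apply (continuity_plus (fun b => (INR k - 1) * exp (b * INR k - beta * c k)) (fmean beta c l)); auto.
    reg.
Qed.

Lemma sumN_seq0 D g : sumN (seq 0 (S D)) g = g 0%nat + sumN (seq 1 D) g.
Proof. reflexivity. Qed.

Lemma ln_strict y : 0 < y -> y <> 1 -> ln y < y - 1.
Proof.
  intros Hy Hne. assert (ln y <> 0).
  { intros H. apply Hne. rewrite <- (exp_ln y Hy), H. apply exp_0. }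
  apply exp_ineq1 in H. rewrite exp_ln in H; lra.
Qed.

Lemma ln_weak y : 0 < y -> ln y <= y - 1.
Proof. intros Hy. destruct (Req_dec y 1). subst. rewrite ln_1. lra. left; apply ln_strict; auto. Qed.

Lemma sumN_zero_each l g : (forall x, In x l -> 0 <= g x) -> sumN l g <= 0 -> forall x, In x l -> g x = 0.
Proof.
  induction l; simpl; intros H1 H2 x Hx. contradiction.
  assert (0 <= g a) by auto. assert (0 <= sumN l g) by (apply sumN_nonneg; auto).
  destruct Hx as [<-|Hx]. lra. apply IHl; auto. lra.
Qed.

Lemma exp_le_mono x y : x <= y -> exp x <= exp y.
Proof. intros H. destruct (Req_dec x y). subst; lra. left; apply exp_increasing; lra. Qed.

Lemma sumN_ge_one l g x : In x l -> (forall y, In y l -> 0 <= g y) -> g x <= sumN l g.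
Proof.
  induction l; simpl; intros Hx Hp. contradiction.
  assert (0 <= g a) by auto. assert (0 <= sumN l g) by (apply sumN_nonneg; auto).
  destruct Hx as [<-|Hx]. lra. assert (g x <= sumN l g) by auto. lra.
Qed.

Lemma tilt_exists D beta c : (2 <= D)%nat ->
  exists b, fmean beta c (seq 0 (S D)) b = 0.
Proof.
  intros HD.
  set (w := fun k => exp (- beta * c k)).
  set (W := sumN (seq 1 D) (fun k => (INR k - 1) * w k)).
  assert (HW : 0 <= W).
  { apply sumN_nonneg. intros k Hk. apply in_seq in Hk. apply Rmult_le_pos.
    assert (1 <= INR k) by (apply (le_INR 1); lia). lra. left; apply exp_pos. }
  assert (Hw0 : 0 < w 0%nat) by apply exp_pos.
  assert (Hw2 : 0 < w 2%nat) by apply exp_pos.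
  assert (Hterm : forall b k, exp (b * INR k - beta * c k) = exp (b * INR k) * w k).
  { intros b k. unfold w. rewrite <- exp_plus. f_equal. ring. }
  set (b1 := Rmin 0 (ln (w 0%nat / (2 * (W + 1))) / 2)).
  assert (Hb1 : b1 <= 0) by apply Rmin_l.
  assert (Hf1 : fmean beta c (seq 0 (S D)) b1 < 0).
  { unfold fmean. rewrite sumN_seq0.
    assert (sumN (seq 1 D) (fun k => (INR k - 1) * exp (b1 * INR k - beta * c k)) <= exp (2 * b1) * W).
    { unfold W. rewrite <- sumN_scal. apply sumN_le. intros k Hk. apply in_seq in Hk.
      assert (1 <= INR k) by (apply (le_INR 1); lia).
      rewrite Hterm. assert (0 < w k) by apply exp_pos.
      destruct (Nat.eq_dec k 1).
      - subst. simpl. lra.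
      - assert (2 <= INR k) by (apply (le_INR 2); lia).
        assert (exp (b1 * INR k) <= exp (2 * b1)) by (apply exp_le_mono; nra).
        assert (0 <= INR k - 1) by lra.
        assert (0 <= (INR k - 1) * w k) by nra. nra. }
    assert (exp (2 * b1) <= w 0%nat / (2 * (W + 1))).
    { rewrite <- (exp_ln (w 0%nat / (2 * (W + 1)))).
      apply exp_le_mono. assert (b1 <= ln (w 0%nat / (2 * (W + 1))) / 2) by apply Rmin_r. lra.
      apply Rdiv_lt_0_compat; lra. }
    assert (exp (2 * b1) * W <= w 0%nat / (2 * (W + 1)) * W) by (apply Rmult_le_compat_r; auto).
    assert (w 0%nat / (2 * (W + 1)) * W < w 0%nat / 2 * 1).
    { unfold Rdiv. rewrite Rinv_mult. 
      assert (0 < / (W + 1)) by (apply Rinv_0_lt_compat; lra).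
      assert (/ (W + 1) * W < 1).
      { apply (Rmult_lt_reg_l (W + 1)); [lra|]. rewrite <- Rmult_assoc, Rinv_r by lra. lra. }
      assert (0 < w 0%nat * / 2) by lra.
      replace (w 0%nat * (/ 2 * / (W + 1)) * W) with ((w 0%nat * / 2) * (/ (W + 1) * W)) by ring.
      apply Rmult_lt_compat_l; auto. }
    replace (exp (b1 * INR 0 - beta * c 0%nat)) with (w 0%nat) by (rewrite Hterm; simpl; rewrite Rmult_0_r, exp_0; ring). simpl INR. lra. }
  set (b2 := Rmax (b1 + 1) (ln (2 * w 0%nat / w 2%nat) / 2)).
  assert (Hf2 : 0 < fmean beta c (seq 0 (S D)) b2).
  { unfold fmean. rewrite sumN_seq0.
    assert ((INR 2 - 1) * exp (b2 * INR 2 - beta * c 2%nat) <=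
            sumN (seq 1 D) (fun k => (INR k - 1) * exp (b2 * INR k - beta * c k))).
    { apply (sumN_ge_one _ (fun k => (INR k - 1) * exp (b2 * INR k - beta * c k)) 2%nat).
      apply in_seq; lia. intros k Hk. apply in_seq in Hk.
      assert (1 <= INR k) by (apply (le_INR 1); lia).
      apply Rmult_le_pos. lra. left; apply exp_pos. }
    rewrite !Hterm in *. simpl INR in *. rewrite Rmult_0_r, exp_0.
    assert (2 * w 0%nat / w 2%nat <= exp (b2 * (1 + 1))).
    { rewrite <- (exp_ln (2 * w 0%nat / w 2%nat)).
      apply exp_le_mono. assert (ln (2 * w 0%nat / w 2%nat) / 2 <= b2) by apply Rmax_r. lra.
      apply Rdiv_lt_0_compat; lra. }
    assert (2 * w 0%nat <= exp (b2 * (1 + 1)) * w 2%nat).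
    { apply (Rmult_le_compat_r (w 2%nat)) in H0; [|lra]. unfold Rdiv in H0.
      rewrite Rmult_assoc, Rinv_l in H0 by lra. lra. }
    lra. }
  assert (b1 < b2) by (assert (b1 + 1 <= b2) by apply Rmax_l; lra).
  destruct (IVT _ b1 b2 (fmean_cont beta c (seq 0 (S D))) H Hf1 Hf2) as [z [_ Hz]].
  exists z; auto.
Qed.

Lemma sumN_minus l g1 g2 : sumN l (fun x => g1 x - g2 x) = sumN l g1 - sumN l g2.
Proof. induction l; simpl; [ring|]. unfold sumN in *. simpl. rewrite IHl. ring. Qed.

Lemma sumN_zero l : sumN l (fun _ => 0) = 0.
Proof. induction l as [|x l IHl]. reflexivity. unfold sumN in *; simpl. rewrite IHl; ring. Qed.

Lemma gibbs_term q p : 0 <= q -> 0 < p -> 0 <= xlnx q - q * ln p - q + p.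
Proof.
  intros Hq Hp. unfold xlnx. destruct (Req_EM_T q 0). subst. lra.
  assert (0 < q) by lra.
  assert (ln (p / q) <= p / q - 1) by (apply ln_weak; apply Rdiv_lt_0_compat; auto).
  unfold Rdiv in H0. rewrite ln_mult, ln_Rinv in H0 by (auto; apply Rinv_0_lt_compat; auto).
  assert (q * (ln p + - ln q) <= q * (p * / q - 1)) by (apply Rmult_le_compat_l; lra).
  replace (q * (p * / q - 1)) with (p - q) in H1 by (field; lra). lra.
Qed.

Lemma gibbs_term_eq q p : 0 <= q -> 0 < p -> xlnx q - q * ln p - q + p = 0 -> q = p.
Proof.
  intros Hq Hp He. unfold xlnx in He. destruct (Req_EM_T q 0). subst. lra.
  assert (0 < q) by lra.
  destruct (Req_dec q p); auto. exfalso.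
  assert (ln (p / q) < p / q - 1).
  { apply ln_strict. apply Rdiv_lt_0_compat; auto. intros Heq.
    apply H0. unfold Rdiv in Heq. apply (Rmult_eq_compat_r q) in Heq.
    rewrite Rmult_assoc, Rinv_l in Heq by lra. lra. }
  unfold Rdiv in H1. rewrite ln_mult, ln_Rinv in H1 by (auto; apply Rinv_0_lt_compat; auto).
  assert (q * (ln p + - ln q) < q * (p * / q - 1)) by (apply Rmult_lt_compat_l; lra).
  replace (q * (p * / q - 1)) with (p - q) in H2 by (field; lra). lra.
Qed.

Lemma pstar_form D beta c pstar : (2 <= D)%nat -> is_minimizer_J D c beta pstar ->
  exists a b, forall k, (k <= D)%nat -> pstar k = exp (a + b * INR k - beta * c k).
Proof.
  intros HD [HM Hmin].
  destruct (tilt_exists D beta c HD) as [b0 Hb0].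
  set (e := fun k => exp (b0 * INR k - beta * c k)).
  set (Zs := sumN (seq 0 (S D)) e).
  assert (HZ : 0 < Zs).
  { apply Rlt_le_trans with (e 0%nat). apply exp_pos.
    apply sumN_ge_one. apply in_seq; lia. intros; left; apply exp_pos. }
  set (a := - ln Zs).
  set (p := fun k => exp (a + b0 * INR k - beta * c k)).
  assert (Hpe : forall k, p k = e k / Zs).
  { intros k. unfold p, e, a. replace (- ln Zs + b0 * INR k - beta * c k) with
      ((b0 * INR k - beta * c k) + - ln Zs) by ring.
    rewrite exp_plus, exp_Ropp, exp_ln; auto. }
  assert (Hp0 : forall k, 0 < p k) by (intros; apply exp_pos).
  assert (Hsum : sumN (seq 0 (S D)) p = 1).
  { rewrite (sumN_ext _ _ (fun k => / Zs * e k)) by (intros; rewrite Hpe; unfold Rdiv; ring).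
    rewrite sumN_scal. fold Zs. field. lra. }
  assert (Hmean : sumN (seq 0 (S D)) (fun k => INR k * p k) = 1).
  { rewrite (sumN_ext _ _ (fun k => p k + / Zs * ((INR k - 1) * e k)))
      by (intros; rewrite Hpe; unfold Rdiv; ring).
    rewrite sumN_plus, sumN_scal, Hsum. unfold fmean in Hb0. fold e in Hb0.
    change (sumN (seq 0 (S D)) (fun x => (INR x - 1) * e x)) with
      (sumN (seq 0 (S D)) (fun k => (INR k - 1) * exp (b0 * INR k - beta * c k))).
    rewrite Hb0. ring. }
  assert (HpM : in_M D p).
  { split; [|split].
    - intros k Hk. split. left; auto. rewrite <- Hsum.
      apply sumN_ge_one. apply in_seq; lia. intros; left; auto.
    - rewrite sum_f_R0_sumN. auto.
    - rewrite sum_f_R0_sumN. auto. }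
  assert (HJ : forall q, in_M D q ->
     J D c beta q = sumN (seq 0 (S D)) (fun k => xlnx (q k) - q k * ln (p k) - q k + p k) + (a + b0)).
  { intros q [Hq1 [Hq2 Hq3]]. unfold J. rewrite !sum_f_R0_sumN in *.
    rewrite !sumN_plus, !sumN_minus, Hsum, Hq2.
    rewrite (sumN_ext _ (fun k => q k * ln (p k)) (fun k => a * q k + b0 * (INR k * q k) - beta * (q k * c k)))
      by (intros; unfold p; rewrite ln_exp; ring).
    rewrite sumN_minus, sumN_plus, !sumN_scal, Hq2, Hq3. ring. }
  assert (HJp : J D c beta p = a + b0).
  { rewrite HJ by auto. rewrite (sumN_ext _ _ (fun _ => 0)).
    - rewrite sumN_zero; ring.
    - intros k _. unfold xlnx. destruct (Req_EM_T (p k) 0). assert (H := Hp0 k); lra. ring. }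
  assert (HT : sumN (seq 0 (S D)) (fun k => xlnx (pstar k) - pstar k * ln (p k) - pstar k + p k) <= 0).
  { assert (H := Hmin p HpM). rewrite HJp, HJ in H by auto. lra. }
  exists a, b0. intros k Hk.
  destruct HM as [HM1 _].
  apply (gibbs_term_eq (pstar k) (p k)). apply HM1; auto. auto.
  apply (sumN_zero_each (seq 0 (S D)) (fun k => xlnx (pstar k) - pstar k * ln (p k) - pstar k + p k)); auto.
  intros x Hx. apply in_seq in Hx. apply gibbs_term; auto. apply HM1; lia.
  apply in_seq; lia.
Qed.


Lemma sumN_ind g x s n :
  sumN (seq s n) (fun k => g k * (if Nat.eqb x k then 1 else 0)) =
  if (Nat.leb s x && Nat.ltb x (s + n))%bool then g x else 0.
Proof.
  revert s; induction n; intros s.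
  - simpl. destruct (Nat.leb s x) eqn:E1; destruct (Nat.ltb x (s + 0)) eqn:E2; simpl; auto.
    apply Nat.leb_le in E1; apply Nat.ltb_lt in E2; lia.
  - change (sumN (seq s (S n)) (fun k => g k * (if Nat.eqb x k then 1 else 0))) with
      (g s * (if Nat.eqb x s then 1 else 0) + sumN (seq (S s) n) (fun k => g k * (if Nat.eqb x k then 1 else 0))).
    rewrite IHn. destruct (Nat.eqb x s) eqn:E.
    + apply Nat.eqb_eq in E. subst s.
      replace (Nat.leb (S x) x) with false by (symmetry; apply Nat.leb_gt; lia).
      replace (Nat.leb x x && Nat.ltb x (x + S n))%bool with true.
      simpl; ring. symmetry. apply andb_true_intro; split; [apply Nat.leb_le|apply Nat.ltb_lt]; lia.
    + apply Nat.eqb_neq in E. rewrite Rmult_0_r, Rplus_0_l.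
      destruct (Nat.leb (S s) x) eqn:E1; destruct (Nat.ltb x (S s + n)) eqn:E2;
      destruct (Nat.leb s x) eqn:E3; destruct (Nat.ltb x (s + S n)) eqn:E4; simpl; auto;
      repeat match goal with
             | H : Nat.leb _ _ = true |- _ => apply Nat.leb_le in H
             | H : Nat.leb _ _ = false |- _ => apply Nat.leb_gt in H
             | H : Nat.ltb _ _ = true |- _ => apply Nat.ltb_lt in H
             | H : Nat.ltb _ _ = false |- _ => apply Nat.ltb_ge in H
             end; lia.
Qed.

Lemma sumN_ind0 D g x : (x <= D)%nat ->
  sumN (seq 0 (S D)) (fun k => g k * (if Nat.eqb x k then 1 else 0)) = g x.
Proof.
  intros H. rewrite sumN_ind. replace (Nat.leb 0 x && Nat.ltb x (0 + S D))%bool with true; auto.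
  symmetry. apply andb_true_intro; split; [apply Nat.leb_le|apply Nat.ltb_lt]; lia.
Qed.

Lemma sumN_cnt D g w : Forall (fun x => x <= D)%nat w ->
  sumN (seq 0 (S D)) (fun k => g k * INR (cnt k w)) = sumN w g.
Proof.
  induction w as [|x w IH]; intros HF.
  - change (sumN nil g) with 0. rewrite (sumN_ext _ _ (fun _ => 0)) by (intros; simpl; ring). apply sumN_zero.
  - inversion HF; subst. simpl cnt.
    rewrite (sumN_ext _ _ (fun k => g k * (if Nat.eqb x k then 1 else 0) + g k * INR (cnt k w))).
    + rewrite sumN_plus, sumN_ind0, IH by auto. reflexivity.
    + intros k _. rewrite plus_INR. destruct (Nat.eqb x k); simpl; ring.
Qed.

Lemma sumN_one w : sumN w (fun _ => 1) = INR (length w).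
Proof. induction w; simpl; auto. unfold sumN in *; simpl. rewrite IHw. destruct (length w); simpl; ring. Qed.

Lemma sumN_INR w : sumN w INR = INR (snat w).
Proof. induction w; simpl; auto. unfold sumN in *; simpl. rewrite IHw, plus_INR. ring. Qed.

Lemma prodw_exp_form (p : nat -> R) D a b beta c w :
  (forall k, (k <= D)%nat -> p k = exp (a + b * INR k - beta * c k)) ->
  Forall (fun x => x <= D)%nat w ->
  prodw p w = exp (a * INR (length w) + b * INR (snat w) - beta * sumN w c).
Proof.
  intros Hp HF. induction w as [|x w IH].
  - simpl. unfold sumN; simpl. rewrite <- exp_0. f_equal. ring.
  - inversion HF; subst. change (prodw p (x :: w)) with (p x * prodw p w).
    rewrite IH, Hp by auto. rewrite <- exp_plus. f_equal. simpl length. simpl snat.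
    rewrite S_INR, plus_INR. unfold sumN; simpl. fold (sumN w c). ring.
Qed.

Lemma weight_prodw (p : nat -> R) D a b beta c t :
  (forall k, (k <= D)%nat -> p k = exp (a + b * INR k - beta * c k)) ->
  max_children_le D t ->
  weight D c beta t = exp (- (a * INR (tsize t) + b * (INR (tsize t) - 1))) * prodw p (enc t).
Proof.
  intros Hp Ht. apply mcl_enc in Ht.
  rewrite (prodw_exp_form p D a b beta c) by auto.
  unfold weight, Ham. rewrite sum_f_R0_sumN.
  rewrite (sumN_ext _ _ (fun k => c k * INR (cnt k (enc t)))) by (intros; rewrite chi_enc; auto).
  rewrite sumN_cnt by auto. rewrite <- exp_plus. f_equal.
  rewrite tsize_enc. assert (H := snat_enc t).
  replace (INR (snat (enc t))) with (INR (length (enc t)) - 1).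
  ring. rewrite <- H, plus_INR. simpl. ring.
Qed.


Definition devw (D N : nat) (p : nat -> R) (s : list nat) : R :=
  fold_right Rmax 0 (map (fun k => Rabs (INR (cnt k s) / INR N - p k)) (seq 0 (S D))).

Lemma deviation_enc D N p t : deviation D N p t = devw D N p (enc t).
Proof.
  unfold deviation, devw. f_equal. apply map_ext. intros k. rewrite chi_enc. auto.
Qed.

Lemma fold_Rmax_gt {A} (l : list A) h eps : 0 < eps ->
  fold_right Rmax 0 (map h l) > eps -> exists k, In k l /\ h k > eps.
Proof.
  induction l; simpl; intros He H. lra.
  unfold Rmax at 1 in H. destruct (Rle_dec (h a) (fold_right Rmax 0 (map h l))).
  - destruct (IHl He H) as [k [Hk Hk2]]. eauto.
  - exists a; auto.
Qed.

Lemma sumN_cntf k p s :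
  sumN s (fun x => (if Nat.eqb x k then 1 else 0) - p k) = INR (cnt k s) - INR (length s) * p k.
Proof.
  induction s; simpl. unfold sumN; simpl; ring.
  unfold sumN in *; simpl. rewrite IHs. rewrite plus_INR.
  destruct (Nat.eqb a k); simpl; destruct (length s); simpl; ring.
Qed.

Lemma sumL_sumN_swap {A} (l : list A) m F :
  sumL l (fun s => sumN m (fun k => F s k)) = sumN m (fun k => sumL l (fun s => F s k)).
Proof.
  induction l; simpl.
  - symmetry. apply sumN_zero.
  - change (sumN m (fun k => F a k) + sumL l (fun s => sumN m (fun k => F s k)) =
            sumN m (fun k => F a k + sumL l (fun s => F s k))).
    rewrite IHl, sumN_plus. auto.
Qed.

Lemma ind_bound D N p eps lam s : 0 < INR N -> 0 < lam -> 0 < eps ->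
  (if Rgtb (devw D N p s) eps then 1 else 0) <=
  sumN (seq 0 (S D)) (fun k => exp (lam * (INR (cnt k s) - INR N * p k) - lam * INR N * eps) +
                               exp (- lam * (INR (cnt k s) - INR N * p k) - lam * INR N * eps)).
Proof.
  intros HN Hl He. unfold Rgtb. destruct (Rgt_dec (devw D N p s) eps).
  - apply fold_Rmax_gt in r; auto. destruct r as [k [Hk Hgt]].
    apply Rle_trans with (exp (lam * (INR (cnt k s) - INR N * p k) - lam * INR N * eps) +
                          exp (- lam * (INR (cnt k s) - INR N * p k) - lam * INR N * eps)).
    + assert (0 < exp (lam * (INR (cnt k s) - INR N * p k) - lam * INR N * eps)) by apply exp_pos.
      assert (0 < exp (- lam * (INR (cnt k s) - INR N * p k) - lam * INR N * eps)) by apply exp_pos.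
      set (d := INR (cnt k s) - INR N * p k) in *.
      assert (Hd : Rabs d > INR N * eps).
      { replace d with (INR N * (INR (cnt k s) / INR N - p k)) by (unfold d; field; lra).
        rewrite Rabs_mult, Rabs_pos_eq by lra. apply Rmult_gt_compat_l; auto. }
      revert Hd. unfold Rabs. destruct (Rcase_abs d); intros Hd.
      * assert (1 <= exp (- lam * d - lam * INR N * eps)).
        { rewrite <- exp_0. apply exp_le_mono. nra. } lra.
      * assert (1 <= exp (lam * d - lam * INR N * eps)).
        { rewrite <- exp_0. apply exp_le_mono. nra. } lra.
    + apply (sumN_ge_one _ (fun k => exp (lam * (INR (cnt k s) - INR N * p k) - lam * INR N * eps) +
                               exp (- lam * (INR (cnt k s) - INR N * p k) - lam * INR N * eps))); auto.
      intros; assert (H1 := exp_pos (lam * (INR (cnt y s) - INR N * p y) - lam * INR N * eps));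
      assert (H2 := exp_pos (- lam * (INR (cnt y s) - INR N * p y) - lam * INR N * eps)); lra.
  - apply sumN_nonneg. intros; assert (H1 := exp_pos (lam * (INR (cnt x s) - INR N * p x) - lam * INR N * eps));
      assert (H2 := exp_pos (- lam * (INR (cnt x s) - INR N * p x) - lam * INR N * eps)); lra.
Qed.

Lemma num_bound D p eps lam N : isprob D p -> 0 < INR N -> 0 < lam <= / 2 -> 0 < eps ->
  sumL (seqs D N) (fun s => if Rgtb (devw D N p s) eps then prodw p s else 0) <=
  INR (S D) * (2 * exp (INR N * (2 * lam ^ 2) - lam * INR N * eps)).
Proof.
  intros Hp HN Hl He.
  assert (Hp1 : forall k, (k <= D)%nat -> p k <= 1).
  { intros k Hk. destruct Hp as [Hp0 Hps]. rewrite <- Hps.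
    apply sumN_ge_one. apply in_seq; lia. intros x Hx; apply in_seq in Hx; apply Hp0; lia. }
  assert (Hpos : forall s, In s (seqs D N) -> 0 <= prodw p s).
  { intros s Hs. apply In_seqs in Hs. destruct Hs as [_ HF]. induction s; simpl. lra.
    inversion HF; subst. change (0 <= p a * prodw p s). apply Rmult_le_pos; auto. apply (proj1 Hp); auto. }
  eapply Rle_trans.
  { apply sumL_le. intros s Hs.
    assert (H := ind_bound D N p eps lam s HN (proj1 Hl) He).
    assert (Hps := Hpos s Hs).
    apply (Rmult_le_compat_l (prodw p s)) in H; auto.
    replace (prodw p s * (if Rgtb (devw D N p s) eps then 1 else 0)) with
      (if Rgtb (devw D N p s) eps then prodw p s else 0) in H by (destruct Rgtb; ring).
    rewrite <- sumN_scal in H. apply H. }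
  rewrite sumL_sumN_swap.
  replace (INR (S D)) with (sumN (seq 0 (S D)) (fun _ => 1)) by (rewrite sumN_one, length_seq; auto).
  rewrite (Rmult_comm (sumN _ (fun _ => 1))), <- sumN_scal. apply sumN_le. intros k Hk. apply in_seq in Hk. rewrite Rmult_1_r.
  assert (Hf : forall x, (x <= D)%nat -> Rabs ((if Nat.eqb x k then 1 else 0) - p k) <= 1).
  { intros x Hx. assert (0 <= p k) by (apply (proj1 Hp); lia). assert (p k <= 1) by (apply Hp1; lia).
    destruct (Nat.eqb x k); apply Rabs_le; lra. }
  assert (Hm : sumN (seq 0 (S D)) (fun x => p x * ((if Nat.eqb x k then 1 else 0) - p k)) = 0).
  { rewrite (sumN_ext _ _ (fun x => p x * (if Nat.eqb k x then 1 else 0) - p k * p x)).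
    rewrite sumN_minus, sumN_ind0, sumN_scal, (proj2 Hp) by lia. ring.
    intros x _. rewrite Nat.eqb_sym. ring. }
  rewrite (sumL_ext _ _ (fun s => exp (- lam * INR N * eps) *
             (prodw p s * exp (lam * sumN s (fun x => (if Nat.eqb x k then 1 else 0) - p k))) +
             exp (- lam * INR N * eps) *
             (prodw p s * exp ((- lam) * sumN s (fun x => (if Nat.eqb x k then 1 else 0) - p k))))).
  2:{ intros s Hs. apply In_seqs in Hs. destruct Hs as [Hs _]. rewrite sumN_cntf, Hs.
      replace (lam * (INR (cnt k s) - INR N * p k) - lam * INR N * eps) with (- lam * INR N * eps + lam * (INR (cnt k s) - INR N * p k)) by ring. replace (- lam * (INR (cnt k s) - INR N * p k) - lam * INR N * eps) with (- lam * INR N * eps + - lam * (INR (cnt k s) - INR N * p k)) by ring. rewrite !exp_plus. ring. }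
  rewrite sumL_plus, !sumL_scal.
  assert (C1 := chernoff_seqs D p _ 1 lam N Hp Hf Hm ltac:(rewrite Rabs_pos_eq; lra)).
  assert (C2 := chernoff_seqs D p _ 1 (- lam) N Hp Hf Hm ltac:(rewrite Rabs_Ropp, Rabs_pos_eq; lra)).
  replace ((- lam) ^ 2) with (lam ^ 2) in C2 by ring.
  assert (0 < exp (- lam * INR N * eps)) by apply exp_pos.
  replace (exp (INR N * (2 * lam ^ 2) - lam * INR N * eps)) with
    (exp (- lam * INR N * eps) * exp (INR N * (2 * lam ^ 2 * 1 ^ 2))) by (rewrite <- exp_plus; f_equal; ring).
  nra.
Qed.


Definition okb (K : nat) (u : list nat) : bool :=
  posFb (K + 1) u && Nat.leb (fin (K + 1) u) (3 * K).

Definition word (K : nat) (u : list nat) : list nat :=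
  repeat 2%nat K ++ u ++ repeat 1%nat (3 * K - fin (K + 1) u) ++ repeat 0%nat (fin (K + 1) u).

Lemma lk_rep2 K : forall k w, (0 < k)%nat -> lk (k + K) w -> lk k (repeat 2%nat K ++ w).
Proof.
  induction K; intros k w Hk H; simpl. rewrite Nat.add_0_r in H; auto.
  split; auto. apply IHK. lia. replace (k - 1 + 2 + K)%nat with (k + S K)%nat by lia. auto.
Qed.

Lemma lk_rep1 a : forall k w, (0 < k)%nat -> lk k w -> lk k (repeat 1%nat a ++ w).
Proof.
  induction a; intros k w Hk H; simpl; auto. split; auto.
  replace (k - 1 + 1)%nat with k by lia. auto.
Qed.

Lemma lk_rep0 h : lk h (repeat 0%nat h).
Proof. induction h; simpl; auto. split. lia. rewrite Nat.sub_0_r, Nat.add_0_r. auto. Qed.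

Lemma posFb_fin_pos k u : posFb k u = true -> (0 < fin k u)%nat.
Proof.
  revert k; induction u; intros k H; simpl in *. apply Nat.ltb_lt; auto.
  apply andb_prop in H. apply IHu. tauto.
Qed.

Lemma okb_lk K u : okb K u = true -> lk 1 (word K u).
Proof.
  unfold okb, word. intros H. apply andb_prop in H. destruct H as [H1 H2].
  apply Nat.leb_le in H2. assert (Hf := posFb_fin_pos _ _ H1).
  apply lk_rep2. lia. rewrite Nat.add_comm.
  apply posFb_lk; auto. apply lk_rep1; auto. apply lk_rep0.
Qed.

Lemma okb_length K u : okb K u = true -> length (word K u) = (K + length u + 3 * K)%nat.
Proof.
  unfold okb, word. intros H. apply andb_prop in H. destruct H as [_ H2]. apply Nat.leb_le in H2.
  rewrite !length_app, !repeat_length. lia.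
Qed.

Lemma word_letters D K u : (2 <= D)%nat -> Forall (fun x => x <= D)%nat u ->
  Forall (fun x => x <= D)%nat (word K u).
Proof.
  intros HD Hu. unfold word. repeat (apply Forall_app; split); auto;
  apply Forall_forall; intros x Hx; apply repeat_spec in Hx; lia.
Qed.

Lemma word_inj K u1 u2 : length u1 = length u2 -> word K u1 = word K u2 -> u1 = u2.
Proof.
  unfold word. intros Hl H. apply app_inv_head in H.
  assert (firstn (length u1) (u1 ++ repeat 1%nat (3 * K - fin (K + 1) u1) ++ repeat 0%nat (fin (K + 1) u1)) =
          firstn (length u1) (u2 ++ repeat 1%nat (3 * K - fin (K + 1) u2) ++ repeat 0%nat (fin (K + 1) u2)))
    by (rewrite H; auto).
  rewrite !firstn_app, Nat.sub_diag, Hl, Nat.sub_diag, !firstn_all in H0. simpl in H0.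
  rewrite !app_nil_r in H0. rewrite <- Hl, firstn_all in H0. auto.
Qed.

Lemma prodw_app p w1 w2 : prodw p (w1 ++ w2) = prodw p w1 * prodw p w2.
Proof. induction w1; simpl. unfold prodw; simpl; ring. change (p a * prodw p (w1 ++ w2) = p a * prodw p w1 * prodw p w2). rewrite IHw1; ring. Qed.

Lemma prodw_repeat p x n : prodw p (repeat x n) = p x ^ n.
Proof. induction n; simpl. reflexivity. change (p x * prodw p (repeat x n) = p x * p x ^ n). rewrite IHn; auto. Qed.

Lemma prodw_nonneg D p u : isprob D p -> Forall (fun x => x <= D)%nat u -> 0 <= prodw p u.
Proof.
  intros Hp HF. induction u; simpl. unfold prodw; simpl; lra.
  inversion HF; subst. change (0 <= p a * prodw p u). apply Rmult_le_pos; auto. apply (proj1 Hp); auto.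
Qed.

Lemma prodw_word D p pi K u : isprob D p -> Forall (fun x => x <= D)%nat u -> 0 <= pi ->
  pi <= p 0%nat -> pi <= p 1%nat -> pi <= p 2%nat -> okb K u = true ->
  pi ^ (4 * K) * prodw p u <= prodw p (word K u).
Proof.
  intros Hp HF Hpi H0 H1 H2 Hok. unfold word. rewrite !prodw_app, !prodw_repeat.
  unfold okb in Hok. apply andb_prop in Hok. destruct Hok as [_ Hle]. apply Nat.leb_le in Hle.
  assert (Hu := prodw_nonneg D p u Hp HF).
  replace (4 * K)%nat with (K + ((3 * K - fin (K + 1) u) + fin (K + 1) u))%nat by lia.
  rewrite !pow_add.
  assert (pi ^ K <= p 2%nat ^ K) by (apply pow_incr; lra).
  assert (pi ^ (3 * K - fin (K + 1) u) <= p 1%nat ^ (3 * K - fin (K + 1) u)) by (apply pow_incr; lra).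
  assert (pi ^ fin (K + 1) u <= p 0%nat ^ fin (K + 1) u) by (apply pow_incr; lra).
  assert (0 <= pi ^ K) by (apply pow_le; auto).
  assert (0 <= pi ^ (3 * K - fin (K + 1) u)) by (apply pow_le; auto).
  assert (0 <= pi ^ fin (K + 1) u) by (apply pow_le; auto).
  set (A := pi ^ K) in *. set (B := pi ^ (3 * K - fin (K + 1) u)) in *. set (C := pi ^ fin (K + 1) u) in *.
  set (A' := p 2%nat ^ K) in *. set (B' := p 1%nat ^ (3 * K - fin (K + 1) u)) in *. set (C' := p 0%nat ^ fin (K + 1) u) in *.
  replace (A * (B * C) * prodw p u) with (A * (prodw p u * (B * C))) by ring.
  apply Rmult_le_compat; auto. apply Rmult_le_pos; auto. apply Rmult_le_pos; auto.
  apply Rmult_le_compat_l; auto. apply Rmult_le_compat; auto.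
Qed.

Lemma lower_bound D p pi N K L l :
  enumerates D N l -> isprob D p -> (2 <= D)%nat -> (L + 4 * K = N)%nat -> 0 <= pi ->
  pi <= p 0%nat -> pi <= p 1%nat -> pi <= p 2%nat ->
  pi ^ (4 * K) * sumL (seqs D L) (fun u => if okb K u then prodw p u else 0) <=
  sumL l (fun t => prodw p (enc t)).
Proof.
  intros [Hnd Hl] Hp HD HN Hpi H0 H1 H2.
  rewrite <- sumL_filter, <- sumL_scal.
  change (sumL l (fun t => prodw p (enc t))) with (sumL l (fun t => prodw p (enc t))).
  rewrite <- (sumL_map enc l (prodw p)).
  apply Rle_trans with (sumL (filter (okb K) (seqs D L)) (fun u => prodw p (word K u))).
  { apply sumL_le. intros u Hu. apply filter_In in Hu. destruct Hu as [Hu Hok].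
    apply In_seqs in Hu. apply (prodw_word D); tauto. }
  rewrite <- (sumL_map (word K)).
  apply sumL_incl_le.
  - apply NoDup_map_inj. apply NoDup_filter, NoDup_seqs.
    intros x y Hx Hy. apply filter_In in Hx, Hy. destruct Hx as [Hx _], Hy as [Hy _]. apply In_seqs in Hx, Hy.
    apply word_inj. destruct Hx as [-> _], Hy as [-> _]. auto.
  - intros w Hw. apply in_map_iff in Hw. destruct Hw as [u [<- Hu]].
    apply filter_In in Hu. destruct Hu as [Hu Hok]. apply In_seqs in Hu. destruct Hu as [Hlen HF].
    destruct (lk_parse1 _ (okb_lk K u Hok)) as [t Ht].
    apply in_map_iff. exists t. split; auto. apply Hl. split.
    + rewrite tsize_enc, Ht, okb_length by auto. lia.
    + apply mcl_enc. rewrite Ht. apply word_letters; auto.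
  - intros w Hw. apply in_map_iff in Hw. destruct Hw as [t [<- Ht]].
    apply Hl in Ht. destruct Ht as [_ Ht]. apply mcl_enc in Ht. apply (prodw_nonneg D); auto.
Qed.


Lemma good_mass D p K L lam : isprob D p -> (1 <= D)%nat ->
  sumN (seq 0 (S D)) (fun x => p x * (INR x - 1)) = 0 -> 0 < lam -> lam * INR D <= / 2 ->
  1 - ((INR L + 1) * exp (INR L * (2 * lam ^ 2 * INR D ^ 2)) * exp (- lam * INR (K + 1)) +
       exp (- lam * (2 * INR K)) * exp (INR L * (2 * lam ^ 2 * INR D ^ 2)))
  <= sumL (seqs D L) (fun u => if okb K u then prodw p u else 0).
Proof.
  intros Hp HD Hm Hl HlD.
  assert (Htot : sumL (seqs D L) (prodw p) = 1) by (rewrite sumL_prodw, (proj2 Hp); apply pow1).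
  assert (Hf : forall x, (x <= D)%nat -> Rabs (INR x - 1) <= INR D).
  { intros x Hx. apply le_INR in Hx. assert (0 <= INR x) by apply pos_INR.
    assert (1 <= INR D) by (apply (le_INR 1); lia). apply Rabs_le. lra. }
  set (M := exp (2 * lam ^ 2 * INR D ^ 2)).
  assert (HM1 : 1 <= M).
  { unfold M. rewrite <- exp_0. apply exp_le_mono. assert (0 <= lam^2) by apply pow2_ge_0.
    assert (0 <= INR D ^ 2) by apply pow2_ge_0. nra. }
  assert (HS : sumN (seq 0 (S D)) (fun x => p x * exp (- lam * (INR x - 1))) <= M).
  { unfold M. replace (lam ^ 2) with ((- lam) ^ 2) by ring. apply (mgf_one D p (fun x => INR x - 1) (INR D) (- lam)); auto.
    rewrite Rabs_Ropp, Rabs_pos_eq; lra. }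
  assert (Q := Qrec_bound D p lam M L Hp HM1 HS (INR (K + 1))).
  assert (C := chernoff_seqs D p (fun x => INR x - 1) (INR D) lam L Hp Hf Hm ltac:(rewrite Rabs_pos_eq; lra)).
  assert (Hbad : forall u, In u (seqs D L) -> (if okb K u then 0 else prodw p u) <=
             prodw p u * Qrec lam (INR (K + 1)) u +
             exp (- lam * (2 * INR K)) * (prodw p u * exp (lam * sumN u (fun x => INR x - 1)))).
  { intros u Hu. apply In_seqs in Hu. destruct Hu as [_ HF].
    assert (Hpu := prodw_nonneg D p u Hp HF).
    assert (0 <= Qrec lam (INR (K + 1)) u) by apply Qrec_nonneg.
    assert (0 < exp (- lam * (2 * INR K))) by apply exp_pos.
    assert (0 < exp (lam * sumN u (fun x => INR x - 1))) by apply exp_pos.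
    assert (0 <= prodw p u * Qrec lam (INR (K + 1)) u) by (apply Rmult_le_pos; lra).
    assert (0 <= exp (- lam * (2 * INR K)) * (prodw p u * exp (lam * sumN u (fun x => INR x - 1)))).
    { apply Rmult_le_pos; [lra|]. apply Rmult_le_pos; lra. }
    unfold okb. destruct (posFb (K + 1) u) eqn:E1; cbn [andb].
    - destruct (Nat.leb (fin (K + 1) u) (3 * K)) eqn:E2; simpl. lra.
      apply Nat.leb_gt in E2. apply le_INR in E2. rewrite posFb_fin in E2 by auto.
      rewrite sR_sumN in E2. rewrite S_INR, mult_INR, plus_INR in E2. simpl in E2.
      assert (1 <= exp (- lam * (2 * INR K)) * exp (lam * sumN u (fun x => INR x - 1))).
      { rewrite <- exp_plus. apply Rle_trans with (exp 0). rewrite exp_0; lra. apply exp_le_mono. nra. }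
      assert (prodw p u * 1 <= prodw p u * (exp (- lam * (2 * INR K)) * exp (lam * sumN u (fun x => INR x - 1))))
        by (apply Rmult_le_compat_l; auto).
      nra.
    - assert (1 <= Qrec lam (INR (K + 1)) u) by (apply posFb_false; auto).
      assert (prodw p u * 1 <= prodw p u * Qrec lam (INR (K + 1)) u) by (apply Rmult_le_compat_l; auto).
      nra. }
  assert (Hsplit : sumL (seqs D L) (fun u => if okb K u then prodw p u else 0) =
                   1 - sumL (seqs D L) (fun u => if okb K u then 0 else prodw p u)).
  { rewrite <- Htot. 
    assert (sumL (seqs D L) (prodw p) = sumL (seqs D L) (fun u => (if okb K u then prodw p u else 0) + (if okb K u then 0 else prodw p u))).
    { apply sumL_ext. intros; destruct okb; ring. }
    rewrite H, sumL_plus. ring. }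
  rewrite Hsplit.
  assert (sumL (seqs D L) (fun u => if okb K u then 0 else prodw p u) <=
          (INR L + 1) * M ^ L * exp (- lam * INR (K + 1)) + exp (- lam * (2 * INR K)) * exp (INR L * (2 * lam ^ 2 * INR D ^ 2))).
  { eapply Rle_trans. apply sumL_le. apply Hbad.
    rewrite sumL_plus, sumL_scal. apply Rplus_le_compat; auto.
    apply Rmult_le_compat_l; auto. left; apply exp_pos. }
  unfold M in H. rewrite <- exp_INR_mult in H. lra.
Qed.


Lemma nat_arch (X : R) : exists n : nat, X < INR n.
Proof.
  destruct (archimed X) as [H1 _].
  destruct (Z_le_gt_dec 0 (up X)).
  - exists (Z.to_nat (up X)). rewrite INR_IZR_INZ, Z2Nat.id; auto.
  - exists 0%nat. simpl. apply Z.gt_lt, IZR_lt in g. simpl in g. lra.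
Qed.

Lemma exp_sq x : 0 <= x -> x ^ 2 / 4 <= exp x.
Proof.
  intros Hx. replace (exp x) with (exp (x / 2) * exp (x / 2)) by (rewrite <- exp_plus; f_equal; field).
  assert (H := exp_ineq1_le (x / 2)). nra.
Qed.

Lemma asymp C c0 delta : 0 <= C -> 0 < c0 -> 0 < delta ->
  exists N0, forall N, (N0 <= N)%nat -> C * (INR N + 2) * exp (- c0 * INR N) < delta.
Proof.
  intros HC Hc Hd.
  destruct (nat_arch (12 * C / (c0 ^ 2 * delta))) as [N1 HN1].
  exists (S N1). intros N HN.
  assert (HN' : INR N1 < INR N) by (apply lt_INR; lia).
  assert (H1 : 1 <= INR N) by (apply (le_INR 1); lia).
  assert (Hq : 0 < c0 ^ 2 * delta) by (apply Rmult_lt_0_compat; [apply pow_lt|]; lra).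
  assert (HX : 12 * C / (c0 ^ 2 * delta) < INR N) by lra.
  assert (He := exp_sq (c0 * INR N) ltac:(nra)).
  assert (Hpos : 0 < exp (c0 * INR N)) by apply exp_pos.
  replace (exp (- c0 * INR N)) with (/ exp (c0 * INR N))
    by (rewrite <- exp_Ropp; f_equal; ring).
  apply (Rmult_lt_reg_r (exp (c0 * INR N))); auto.
  rewrite Rmult_assoc, Rinv_l, Rmult_1_r by lra.
  apply Rle_lt_trans with (C * (3 * INR N)). apply Rmult_le_compat_l; lra.
  apply Rlt_le_trans with (delta * ((c0 * INR N) ^ 2 / 4)); [|apply Rmult_le_compat_l; lra].
  apply (Rmult_lt_compat_r (c0 ^ 2 * delta)) in HX; auto.
  unfold Rdiv in HX. rewrite Rmult_assoc, Rinv_l, Rmult_1_r in HX by lra.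
  assert (0 < INR N) by lra.
  replace (delta * ((c0 * INR N) ^ 2 / 4)) with ((c0 ^ 2 * delta * INR N) * INR N / 4) by (field).
  nra.
Qed.

Lemma cnt_D1 w : Forall (fun x => x <= 1)%nat w ->
  (cnt 0 w + cnt 1 w = length w)%nat /\ snat w = cnt 1 w.
Proof.
  induction w; intros HF; simpl; auto. inversion HF; subst. destruct IHw; auto.
  destruct a as [|[|]]; simpl; lia.
Qed.

Lemma sumL_zero {A} (l : list A) : sumL l (fun _ => 0) = 0.
Proof. induction l. reflexivity. change (0 + sumL l (fun _ => 0) = 0). rewrite IHl; ring. Qed.

Lemma case_D1 beta c pstar enum eps :
  (forall N, enumerates 1 N (enum N)) -> is_minimizer_J 1 c beta pstar -> 0 < eps ->
  Un_cv (fun N => gibbs_prob 1 c beta (enum N) (fun t => Rgtb (deviation 1 N pstar t) eps)) 0.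
Proof.
  intros Henum [[HM1 [HM2 HM3]] _] He.
  simpl in HM2, HM3. assert (Hp1 : pstar 1%nat = 1) by lra.
  assert (Hp0 : pstar 0%nat = 0) by lra.
  intros d Hd. destruct (nat_arch (/ eps)) as [N0 HN0].
  exists (S N0). intros N HN. unfold Rdist.
  assert (HNpos : 0 < INR N) by (apply lt_0_INR; lia).
  assert (INR N0 < INR N) by (apply lt_INR; lia).
  unfold gibbs_prob. change (sumR ?f ?l) with (sumL l f). change (sumR ?f ?l) with (sumL l f).
  rewrite (sumL_ext _ _ (fun _ => 0)).
  - rewrite sumL_zero. unfold Rdiv. rewrite Rmult_0_l. rewrite Rminus_0_r, Rabs_R0. auto.
  - intros t Ht. apply Henum in Ht. destruct Ht as [Hs Ht]. apply mcl_enc in Ht.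
    destruct (cnt_D1 _ Ht) as [Hc1 Hc2]. assert (H3 := snat_enc t).
    rewrite <- tsize_enc, Hs in *.
    unfold Rgtb. destruct (Rgt_dec (deviation 1 N pstar t) eps); auto.
    exfalso. rewrite deviation_enc in r. unfold devw in r. simpl in r.
    assert (cnt 0 (enc t) = 1)%nat by lia.
    assert (INR (cnt 1 (enc t)) = INR N - 1).
    { replace N with (cnt 1 (enc t) + 1)%nat by lia. rewrite plus_INR. simpl. ring. }
    rewrite H0, H1, Hp0, Hp1 in r.
    replace (INR 1 / INR N - 0) with (/ INR N) in r by (simpl; field; lra).
    replace ((INR N - 1) / INR N - 1) with (- / INR N) in r by (field; lra).
    rewrite Rabs_Ropp, Rabs_pos_eq in r by (left; apply Rinv_0_lt_compat; auto).
    assert (/ INR N < eps).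
    { apply (Rmult_lt_reg_l (INR N)); auto. rewrite Rinv_r by lra.
      apply (Rmult_lt_reg_l (/ eps)). apply Rinv_0_lt_compat; auto.
      replace (/ eps * (INR N * eps)) with (INR N) by (field; lra). lra. }
    assert (Rmax (/ INR N) (Rmax (/ INR N) 0) <= eps).
    { apply Rmax_lub. lra. apply Rmax_lub; lra. }
    lra.
Qed.


Lemma gibbs_num_bound D p N l eps :
  enumerates D N l -> isprob D p ->
  sumL l (fun t => if Rgtb (deviation D N p t) eps then prodw p (enc t) else 0) <=
  sumL (seqs D N) (fun s => if Rgtb (devw D N p s) eps then prodw p s else 0).
Proof.
  intros [Hnd Hl] Hp.
  rewrite (sumL_ext _ _ (fun t => (fun s => if Rgtb (devw D N p s) eps then prodw p s else 0) (enc t)))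
    by (intros; rewrite deviation_enc; auto).
  rewrite <- (sumL_map enc l (fun s => if Rgtb (devw D N p s) eps then prodw p s else 0)).
  apply sumL_incl_le.
  - apply NoDup_map_inj; auto. intros x y _ _. apply enc_inj.
  - intros s Hs. apply in_map_iff in Hs. destruct Hs as [t [<- Ht]]. apply Hl in Ht.
    destruct Ht as [Hs Ht]. apply In_seqs. split. rewrite <- tsize_enc; auto. apply mcl_enc; auto.
  - intros s Hs. apply In_seqs in Hs. destruct Rgtb. apply (prodw_nonneg D); tauto. lra.
Qed.

Lemma case_D2 D beta c pstar enum eps : (2 <= D)%nat ->
  (forall N, enumerates D N (enum N)) -> is_minimizer_J D c beta pstar -> 0 < eps ->
  Un_cv (fun N => gibbs_prob D c beta (enum N) (fun t => Rgtb (deviation D N pstar t) eps)) 0.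
Proof.
  intros HD Henum Hmin He.
  destruct (pstar_form D beta c pstar HD Hmin) as [a [b Hab]].
  destruct Hmin as [[HM1 [HM2 HM3]] _].
  set (p := pstar) in *.
  assert (Hp : isprob D p).
  { split. intros x Hx; apply HM1; auto. rewrite <- sum_f_R0_sumN; auto. }
  assert (Hmean : sumN (seq 0 (S D)) (fun x => p x * (INR x - 1)) = 0).
  { rewrite (sumN_ext _ _ (fun x => INR x * p x - p x)) by (intros; ring).
    rewrite sumN_minus, <- !sum_f_R0_sumN, HM2, HM3. ring. }
  assert (Hpos : forall k, (k <= D)%nat -> 0 < p k) by (intros; unfold p; rewrite Hab; auto; apply exp_pos).
  set (pi := Rmin (p 0%nat) (Rmin (p 1%nat) (p 2%nat))).
  assert (Hpi : 0 < pi) by (apply Rmin_pos; [|apply Rmin_pos]; apply Hpos; lia).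
  assert (Hpi0 : pi <= p 0%nat) by apply Rmin_l.
  assert (Hpi1 : pi <= p 1%nat) by (eapply Rle_trans; [apply Rmin_r|apply Rmin_l]).
  assert (Hpi2 : pi <= p 2%nat) by (eapply Rle_trans; [apply Rmin_r|apply Rmin_r]).
  assert (Hpi_le1 : pi <= 1) by (assert (H := HM1 0%nat ltac:(lia)); lra).
  assert (Hlnpi : ln pi <= 0) by (rewrite <- ln_1; destruct (Req_dec pi 1) as [E|E]; [rewrite E; lra|left; apply ln_increasing; lra]).
  set (lam := Rmin eps 1 / 4).
  assert (Hlam : 0 < lam) by (unfold lam; assert (0 < Rmin eps 1) by (apply Rmin_pos; lra); lra).
  assert (Hlam1 : lam <= / 4) by (unfold lam; assert (Rmin eps 1 <= 1) by apply Rmin_r; lra).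
  assert (Hlam2 : lam <= eps / 4) by (unfold lam; assert (Rmin eps 1 <= eps) by apply Rmin_l; lra).
  set (r := lam * eps / 2).
  assert (Hr : 0 < r) by (unfold r; nra).
  destruct (nat_arch (Rmax 4 (- 8 * ln pi / r))) as [m Hm].
  assert (Hm4 : 4 < INR m) by (eapply Rle_lt_trans; [apply Rmax_l|apply Hm]).
  assert (Hm8 : - 8 * ln pi / r < INR m) by (eapply Rle_lt_trans; [apply Rmax_r|apply Hm]).
  assert (Hm4n : (4 <= m)%nat) by (replace 4 with (INR 4) in Hm4 by (simpl; ring); apply INR_lt in Hm4; lia).
  assert (HDr : 2 <= INR D) by (apply (le_INR 2); lia).
  set (lam' := / (8 * INR m * INR D ^ 2)).
  assert (Hlam' : 0 < lam') by (unfold lam'; apply Rinv_0_lt_compat; nra).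
  assert (HlamD : lam' * INR D <= / 2).
  { unfold lam'. replace (/ (8 * INR m * INR D ^ 2) * INR D) with (/ (8 * INR m * INR D)) by (field; lra).
    apply Rinv_le_contravar; nra. }
  set (theta := 2 * lam' ^ 2 * INR D ^ 2).
  assert (Htheta : theta = lam' / (4 * INR m)) by (unfold theta, lam'; field; lra).
  set (c1 := 3 * lam' / (4 * INR m)).
  assert (Hc1 : 0 < c1) by (unfold c1; apply Rdiv_lt_0_compat; lra).
  destruct (asymp (2 * exp lam') c1 (/ 2)) as [N1 HN1]; [assert (H := exp_pos lam'); lra|auto|lra|].
  intros delta Hdelta.
  destruct (asymp (4 * INR (S D)) (r / 2) delta) as [N2 HN2]; [assert (H := pos_INR (S D)); lra|lra|auto|].
  exists (max (max N1 N2) 1). intros N HN.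
  assert (HN1' := HN1 N ltac:(lia)). assert (HN2' := HN2 N ltac:(lia)).
  assert (HNpos : 0 < INR N) by (apply lt_0_INR; lia).
  set (K := (N / m)%nat). set (L := (N - 4 * K)%nat).
  assert (HmK : (m * K <= N)%nat) by (apply Nat.Div0.mul_div_le).
  assert (HLK : (L + 4 * K = N)%nat) by (unfold L; nia).
  assert (HKm : INR K * INR m <= INR N) by (rewrite <- mult_INR; apply le_INR; lia).
  assert (HKm2 : INR N < (INR K + 1) * INR m).
  { assert (H := Nat.div_mod_eq N m). assert (H2 := Nat.mod_upper_bound N m ltac:(lia)).
    fold K in H. rewrite <- S_INR, <- mult_INR. apply lt_INR. nia. }
  assert (HLN : INR L <= INR N) by (apply le_INR; lia).
  assert (HK0 : 0 <= INR K) by apply pos_INR.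
  assert (HG := good_mass D p K L lam' Hp ltac:(lia) Hmean Hlam' HlamD).
  fold theta in HG.
  assert (Hexp1 : exp (INR L * theta) * exp (- lam' * INR K) <= exp lam' * exp (- c1 * INR N)).
  { rewrite <- !exp_plus. apply exp_le_mono. rewrite Htheta. unfold c1.
    assert (INR N / INR m - 1 <= INR K).
    { apply (Rmult_le_reg_r (INR m)); [lra|]. unfold Rdiv. rewrite Rmult_minus_distr_r, Rmult_assoc, Rinv_l by lra. lra. }
    assert (INR L * (lam' / (4 * INR m)) <= INR N * (lam' / (4 * INR m))).
    { apply Rmult_le_compat_r; auto. left; apply Rdiv_lt_0_compat; lra. }
    assert (lam' * (INR N / INR m - 1) <= lam' * INR K) by (apply Rmult_le_compat_l; lra).
    replace (INR N * (lam' / (4 * INR m))) with (lam' * (INR N / INR m) / 4) in H0 by (field; lra).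
    replace (- (3 * lam' / (4 * INR m)) * INR N) with (- 3 * (lam' * (INR N / INR m)) / 4) by (field; lra).
    lra. }
  assert (Hgood : / 2 <= sumL (seqs D L) (fun u => if okb K u then prodw p u else 0)).
  { eapply Rle_trans; [|apply HG].
    assert (E1 : exp (- lam' * INR (K + 1)) <= exp (- lam' * INR K)).
    { apply exp_le_mono. rewrite plus_INR. simpl. nra. }
    assert (E2 : exp (- lam' * (2 * INR K)) <= exp (- lam' * INR K)).
    { apply exp_le_mono. nra. }
    assert (0 < exp (INR L * theta)) by apply exp_pos.
    assert (0 < exp (- lam' * INR (K + 1))) by apply exp_pos.
    assert (0 < exp (- lam' * (2 * INR K))) by apply exp_pos.
    assert (T1 : (INR L + 1) * exp (INR L * theta) * exp (- lam' * INR (K + 1)) <=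
                 (INR N + 2) * (exp (INR L * theta) * exp (- lam' * INR K))).
    { replace ((INR L + 1) * exp (INR L * theta) * exp (- lam' * INR (K + 1))) with
        ((INR L + 1) * (exp (INR L * theta) * exp (- lam' * INR (K + 1)))) by ring.
      assert (0 <= INR L) by apply pos_INR.
      apply Rmult_le_compat; try lra. apply Rmult_le_pos; lra.
      apply Rmult_le_compat_l; lra. }
    assert (T2 : exp (- lam' * (2 * INR K)) * exp (INR L * theta) <=
                 (INR N + 2) * (exp (INR L * theta) * exp (- lam' * INR K))).
    { rewrite Rmult_comm.
      assert (0 < exp (INR L * theta) * exp (- lam' * INR K)) by (apply Rmult_lt_0_compat; apply exp_pos).
      assert (exp (INR L * theta) * exp (- lam' * (2 * INR K)) <= exp (INR L * theta) * exp (- lam' * INR K))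
        by (apply Rmult_le_compat_l; lra).
      nra. }
    assert (0 < exp (- c1 * INR N)) by apply exp_pos.
    assert ((INR N + 2) * (exp (INR L * theta) * exp (- lam' * INR K)) <=
            (INR N + 2) * (exp lam' * exp (- c1 * INR N))) by (apply Rmult_le_compat_l; lra).
    replace (2 * exp lam' * (INR N + 2) * exp (- c1 * INR N)) with
      (2 * ((INR N + 2) * (exp lam' * exp (- c1 * INR N)))) in HN1' by ring.
    lra. }
  assert (HB := lower_bound D p pi N K L (enum N) (Henum N) Hp HD HLK ltac:(lra) Hpi0 Hpi1 Hpi2).
  assert (Hpow : exp (- (r / 2) * INR N) <= pi ^ (4 * K)).
  { rewrite <- (exp_ln pi Hpi). rewrite <- exp_INR_mult. apply exp_le_mono.
    rewrite mult_INR. simpl INR.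
    assert (- 8 * ln pi < r * INR m).
    { apply (Rmult_lt_compat_r r) in Hm8; auto. unfold Rdiv in Hm8.
      rewrite Rmult_assoc, Rinv_l, Rmult_1_r in Hm8 by lra. lra. }
    assert (HKy : INR N * ln pi <= INR K * INR m * ln pi) by nra.
    apply (Rmult_le_reg_r (INR m)); [lra|].
    assert (- (r / 2) * INR N * INR m <= 4 * (INR N * ln pi)) by nra.
    nra. }
  assert (Hpow0 : 0 < pi ^ (4 * K)) by (apply pow_lt; auto).
  assert (HBlow : / 2 * exp (- (r / 2) * INR N) <= sumL (enum N) (fun t => prodw p (enc t))).
  { eapply Rle_trans; [|apply HB].
    assert (0 < exp (- (r / 2) * INR N)) by apply exp_pos.
    rewrite Rmult_comm. apply Rmult_le_compat; lra. }
  assert (HA := gibbs_num_bound D p N (enum N) eps (Henum N) Hp).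
  assert (HA2 := num_bound D p eps lam N Hp HNpos ltac:(lra) He).
  assert (HA3 : exp (INR N * (2 * lam ^ 2) - lam * INR N * eps) <= exp (- r * INR N)).
  { apply exp_le_mono. unfold r. assert (2 * lam ^ 2 <= lam * eps / 2) by nra. nra. }
  assert (HA0 : 0 <= sumL (enum N) (fun t => if Rgtb (deviation D N p t) eps then prodw p (enc t) else 0)).
  { apply sumL_nonneg. intros t Ht. apply Henum in Ht. destruct Ht as [_ Ht]. apply mcl_enc in Ht.
    destruct Rgtb. apply (prodw_nonneg D); auto. lra. }
  set (CN := exp (- (a * INR N + b * (INR N - 1)))).
  assert (HW : forall t, In t (enum N) -> weight D c beta t = CN * prodw p (enc t)).
  { intros t Ht. apply Henum in Ht. destruct Ht as [Hs Ht].
    rewrite (weight_prodw p D a b beta c t) by auto. rewrite Hs. auto. }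
  unfold gibbs_prob. change (sumR ?f ?l) with (sumL l f). change (sumR ?f ?l) with (sumL l f).
  rewrite (sumL_ext (enum N) (weight D c beta) (fun t => CN * prodw p (enc t))) by auto.
  rewrite (sumL_ext (enum N) (fun t => if Rgtb (deviation D N p t) eps then weight D c beta t else 0)
             (fun t => CN * (if Rgtb (deviation D N p t) eps then prodw p (enc t) else 0)))
    by (intros t Ht; rewrite HW by auto; destruct Rgtb; ring).
  rewrite !sumL_scal.
  assert (HCN : 0 < CN) by apply exp_pos.
  set (A := sumL (enum N) (fun t => if Rgtb (deviation D N p t) eps then prodw p (enc t) else 0)) in *.
  set (B := sumL (enum N) (fun t => prodw p (enc t))) in *.
  assert (HBpos : 0 < B) by (assert (0 < exp (- (r / 2) * INR N)) by apply exp_pos; lra).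
  replace (CN * A / (CN * B)) with (A / B) by (field; lra).
  unfold Rdist. rewrite Rminus_0_r. rewrite Rabs_pos_eq by (unfold Rdiv; apply Rmult_le_pos; [lra|left; apply Rinv_0_lt_compat; lra]).
  assert (HAb : A <= INR (S D) * (2 * exp (- r * INR N))).
  { eapply Rle_trans; [apply HA|]. eapply Rle_trans; [apply HA2|].
    apply Rmult_le_compat_l. apply pos_INR. lra. }
  apply (Rmult_lt_reg_r B); auto. unfold Rdiv. rewrite Rmult_assoc, Rinv_l, Rmult_1_r by lra.
  eapply Rle_lt_trans; [apply HAb|].
  assert (exp (- r * INR N) = exp (- (r / 2) * INR N) * exp (- (r / 2) * INR N))
    by (rewrite <- exp_plus; f_equal; field).
  rewrite H.
  assert (0 < exp (- (r / 2) * INR N)) by apply exp_pos.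
  assert (HSD : 0 < INR (S D)) by (apply lt_0_INR; lia).
  assert (4 * INR (S D) * exp (- (r / 2) * INR N) < delta).
  { eapply Rle_lt_trans; [|apply HN2']. 
    assert (4 * INR (S D) * 1 <= 4 * INR (S D) * (INR N + 2)) by (apply Rmult_le_compat_l; lra).
    apply Rmult_le_compat_r; lra. }
  set (E := exp (- (r / 2) * INR N)) in *.
  apply Rlt_le_trans with ((/ 2 * E) * delta).
  - replace (INR (S D) * (2 * (E * E))) with ((/ 2 * E) * (4 * INR (S D) * E)) by field.
    apply Rmult_lt_compat_l; [lra|auto].
  - rewrite Rmult_comm. apply Rmult_le_compat_l; lra.
Qed.


Theorem corollary2 (D : nat) (beta : R) (c : nat -> R) (pstar : nat -> R)
  (enum : nat -> list tree) :
  (1 <= D)%nat -> 0 < beta ->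
  (forall N, enumerates D N (enum N)) ->
  is_minimizer_J D c beta pstar ->
  forall eps : R, 0 < eps ->
    Un_cv (fun N => gibbs_prob D c beta (enum N)
                      (fun t => Rgtb (deviation D N pstar t) eps)) 0.
Proof.
  intros HD Hbeta Henum Hmin eps He.
  destruct (Nat.eq_dec D 1) as [->|HD2].
  - apply case_D1; auto.
  - apply case_D2; auto. lia.
Qed.
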